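(* Let $n_1,n_2,n_3$ be integers with $3\le n_1,n_2\le n_3$ and let $W$ be a subset of the vertex set of $K(\mathbf{n})$. If the landmark graph $\mathcal{G}(W)$ contains a triple loop and a rainbow $2$-$2$-triangle, then $W$ is not a resolving set of $K(\mathbf{n})$.
   Context: $K(\mathbf{n})=K_{n_1}\times K_{n_2}\times K_{n_3}$ is the direct product of complete graphs: vertices are triples $(x_1,x_2,x_3)$, $1\le x_i\le n_i$, adjacent iff they differ in every coordinate. A set $W$ of vertices is resolving if for every two distinct vertices $x,y\notin W$ some $w\in W$ has $d(x,w)\neq d(y,w)$. Landmark graph: $W_{i,a}=\{w\in W: w_i=a\}$; $\mathcal{G}(W)$ is the hypergraph on $W$ whose hyperedges are the nonempty $W_{i,a}$, each colored $i$. A triple loop is a vertex $u\in W$ such that $\{u\}=W_{1,u_1}=W_{2,u_2}=W_{3,u_3}$. A rainbow $2$-$2$-triangle: distinct $w_1,w_2,w_3\in W$ and $\{i,j,k\}=\{1,2,3\}$ with $\{w_1,w_2\}$ a hyperedge of color $i$, $\{w_2,w_3\}$ a hyperedge of color $j$, and $w_1,w_3$ in a common hyperedge of color $k$. *)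

(* Defs.v *)
From mathcomp Require Import all_boot.
Set Implicit Arguments. Unset Strict Implicit. Unset Printing Implicit Defensive.

Definition vtx (n1 n2 n3 : nat) : finType := ('I_n1 * 'I_n2 * 'I_n3)%type.

(* coordinate i (i = 0,1,2 stands for 1,2,3 in the paper) as a nat *)
Definition coord n1 n2 n3 (v : vtx n1 n2 n3) (i : 'I_3) : nat :=
  match val i with
  | 0 => val v.1.1
  | 1 => val v.1.2
  | _ => val v.2
  end.

(* adjacency in the direct product of complete graphs: differ in every coordinate *)
Definition adj n1 n2 n3 (x y : vtx n1 n2 n3) : bool :=
  [&& x.1.1 != y.1.1, x.1.2 != y.1.2 & x.2 != y.2].

Fixpoint walk n1 n2 n3 (k : nat) (x y : vtx n1 n2 n3) : bool :=
  match k with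
  | 0 => x == y
  | k'.+1 => [exists z, adj x z && walk k' z y]
  end.

(* graph distance: least k with a walk of length k; all finite distances are
   < #|V|, and unreachable pairs get the value #|V| (playing the role of oo). *)
Definition dist n1 n2 n3 (x y : vtx n1 n2 n3) : nat :=
  find (fun k => walk k x y) (iota 0 #|vtx n1 n2 n3|).

Definition resolving n1 n2 n3 (W : {set vtx n1 n2 n3}) : Prop :=
  forall x y : vtx n1 n2 n3, x \notin W -> y \notin W -> x != y ->
    exists2 w, w \in W & dist x w != dist y w.

Definition Wia n1 n2 n3 (W : {set vtx n1 n2 n3}) (i : 'I_3) (a : nat)
  : {set vtx n1 n2 n3} := [set w in W | coord w i == a].

(* hyperedges of G(W): nonempty W_{i,a}, colored i *)
Definition hyperedge n1 n2 n3 (W : {set vtx n1 n2 n3}) (i : 'I_3)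
  (E : {set vtx n1 n2 n3}) : Prop :=
  exists a, E = Wia W i a /\ E != set0.

Definition triple_loop n1 n2 n3 (W : {set vtx n1 n2 n3}) (u : vtx n1 n2 n3) : Prop :=
  u \in W /\ forall i : 'I_3, Wia W i (coord u i) = [set u].

Definition has_triple_loop n1 n2 n3 (W : {set vtx n1 n2 n3}) : Prop :=
  exists u, triple_loop W u.

Definition has_rainbow_22_triangle n1 n2 n3 (W : {set vtx n1 n2 n3}) : Prop :=
  exists (w1 w2 w3 : vtx n1 n2 n3) (i j k : 'I_3),
    [/\ [/\ w1 \in W, w2 \in W & w3 \in W],
        [/\ w1 != w2, w2 != w3 & w1 != w3],
        [/\ i != j, j != k & i != k],
        hyperedge W i [set w1; w2] /\ hyperedge W j [set w2; w3] &
        exists E, hyperedge W k E /\ w1 \in E /\ w3 \in E].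

(* Main.v *)
Require Import Defs.
From mathcomp Require Import all_boot.
From mathcomp Require Import zify.
Set Implicit Arguments. Unset Strict Implicit.

Lemma cover3 (i j k l : 'I_3) : i != j -> j != k -> i != k -> [|| l == i, l == j | l == k].
Proof.
by case: i => [[|[|[|?]]] ?]; case: j => [[|[|[|?]]] ?]; case: k => [[|[|[|?]]] ?];
   case: l => [[|[|[|?]]] ?].
Qed.

Section S.
Variables n1 n2 n3 : nat.
Local Notation V := (vtx n1 n2 n3).

Lemma vtx_eq (x y : V) : (forall l, coord x l = coord y l) -> x = y.
Proof.
case: x => [[x1 x2] x3]; case: y => [[y1 y2] y3] H.
have h1 := H ord0; have h2 := H (Ordinal (isT : 1 < 3)); have h3 := H (Ordinal (isT : 2 < 3)).
rewrite /coord /= in h1 h2 h3.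
by rewrite (val_inj h1) (val_inj h2) (val_inj h3).
Qed.

Definition share (x y : V) := [exists l, coord x l == coord y l].

Lemma adjE (x y : V) : adj x y = ~~ share x y.
Proof.
rewrite /adj /share negb_exists.
case: x => [[x1 x2] x3]; case: y => [[y1 y2] y3] /=.
apply/and3P/forallP => [[h1 h2 h3] [[|[|[|?]]] p] //|H].
split; [exact: (H ord0)|exact: (H (Ordinal (isT : 1 < 3)))|exact: (H (Ordinal (isT : 2 < 3)))].
Qed.

Definition mix (s : 'I_3 -> V) : V :=
  (((s ord0).1.1, (s (Ordinal (isT : 1 < 3))).1.2), (s (Ordinal (isT : 2 < 3))).2).

Lemma coord_mix s l : coord (mix s) l = coord (s l) l.
Proof.
case: l => [[|[|[|?]]] p] //; rewrite /mix /coord /=.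
- by rewrite (_ : Ordinal p = ord0) //; apply: val_inj.
- by rewrite (_ : Ordinal p = Ordinal (isT : 1 < 3)) //; apply: val_inj.
- by rewrite (_ : Ordinal p = Ordinal (isT : 2 < 3)) //; apply: val_inj.
Qed.

Lemma other (m : nat) (a b : 'I_m) : 3 <= m -> exists z : 'I_m, (z != a) && (z != b).
Proof.
move=> hm.
have : 0 < #|~: [set a; b]|.
  have := cardsC [set a; b]; rewrite card_ord cards2; case: (a != b) => /=; lia.
by case/card_gt0P => z; rewrite !inE negb_or => ?; exists z.
Qed.

Lemma dist_ne (x y : V) : 3 <= n1 -> 3 <= n2 -> 3 <= n3 -> x != y ->
  dist x y = if adj x y then 1 else 2.
Proof.
move=> h1 h2 h3 nxy.
have w2 : walk 2 x y.
  case: x nxy => [[x1 x2] x3] nxy; case: y nxy => [[y1 y2] y3] nxy.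
  have [z1 /andP[a1 b1]] := other x1 y1 h1.
  have [z2 /andP[a2 b2]] := other x2 y2 h2.
  have [z3 /andP[a3 b3]] := other x3 y3 h3.
  apply/existsP; exists ((z1, z2), z3); apply/andP; split.
    by rewrite /adj /= ![_ == z1]eq_sym ![_ == z2]eq_sym ![_ == z3]eq_sym a1 a2 a3.
  apply/existsP; exists ((y1, y2), y3); rewrite eqxx andbT /adj /=; by rewrite b1 b2 b3.
have w1 : walk 1 x y = adj x y.
  apply/existsP/idP => [[z /andP[h /eqP <-]]|h] //; by exists y; rewrite h eqxx.
rewrite /dist card_prod !card_prod !card_ord.
have -> : n1 * n2 * n3 = (n1 * n2 * n3 - 3).+3.
  have : 27 <= n1 * n2 * n3 by rewrite (_ : 27 = 3 * 3 * 3) // !leq_mul.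
  lia.
rewrite /= (negbTE nxy) -/(walk 1 x y) w1.
case: (adj x y) => //=.
by rewrite -/(walk 2 x y) w2.
Qed.
End S.

Theorem mainTheorem3 (n1 n2 n3 : nat) (W : {set vtx n1 n2 n3}) :
  3 <= n1 -> 3 <= n2 -> n1 <= n3 -> n2 <= n3 ->
  has_triple_loop W -> has_rainbow_22_triangle W ->
  ~ resolving W.
Proof.
move=> h1 h2 h13 h23 [u [uW uloop]]
  [w1 [w2 [w3 [i [j [k [[W1 W2 W3] [n12 n23 n13] [nij njk nik]
   [[a [E12 _]] [b [E23 _]]] [E [[c [EE _]] [w1E w3E]]]]]]]]]].
have h3 : 3 <= n3 by apply: leq_trans h13.
have inW (w : vtx n1 n2 n3) l v : (w \in Wia W l v) = (w \in W) && (coord w l == v).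
  by rewrite /Wia inE.
have w1i : coord w1 i = a.
  by have := set21 w1 w2; rewrite E12 inW => /andP[_ /eqP].
have w2i : coord w2 i = a.
  by have := set22 w1 w2; rewrite E12 inW => /andP[_ /eqP].
have w2j : coord w2 j = b.
  by have := set21 w2 w3; rewrite E23 inW => /andP[_ /eqP].
have w3j : coord w3 j = b.
  by have := set22 w2 w3; rewrite E23 inW => /andP[_ /eqP].
have w1k : coord w1 k = c by move: w1E; rewrite EE inW => /andP[_ /eqP].
have w3k : coord w3 k = c by move: w3E; rewrite EE inW => /andP[_ /eqP].
have Ai w : w \in W -> coord w i = a -> w = w1 \/ w = w2.
  move=> wW wi; have : w \in Wia W i a by rewrite inW wW wi eqxx.
  by rewrite -E12 !inE => /orP[/eqP|/eqP]; auto.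
have Bj w : w \in W -> coord w j = b -> w = w2 \/ w = w3.
  move=> wW wj; have : w \in Wia W j b by rewrite inW wW wj eqxx.
  by rewrite -E23 !inE => /orP[/eqP|/eqP]; auto.
have U w l : w \in W -> coord w l = coord u l -> w = u.
  move=> wW wl; have : w \in Wia W l (coord u l) by rewrite inW wW wl eqxx.
  by rewrite uloop inE => /eqP.
have ui : coord u i != a.
  apply/eqP => ua.
  have e1 := U w1 i W1 (etrans w1i (esym ua)).
  have e2 := U w2 i W2 (etrans w2i (esym ua)).
  by move: n12; rewrite e1 e2 eqxx.
have uj : coord u j != b.
  apply/eqP => ub.
  have e1 := U w2 j W2 (etrans w2j (esym ub)).
  have e2 := U w3 j W3 (etrans w3j (esym ub)).
  by move: n23; rewrite e1 e2 eqxx.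
pose x := mix (fun l => if l == i then w1 else if l == j then u else w1).
pose y := mix (fun l => if l == i then u else if l == j then w2 else w1).
have xi : coord x i = a by rewrite coord_mix eqxx.
have xj : coord x j = coord u j by rewrite coord_mix eq_sym (negbTE nij) eqxx.
have xk : coord x k = c.
  by rewrite coord_mix eq_sym (negbTE nik) eq_sym (negbTE njk).
have yi : coord y i = coord u i by rewrite coord_mix eqxx.
have yj : coord y j = b by rewrite coord_mix eq_sym (negbTE nij) eqxx.
have yk : coord y k = c.
  by rewrite coord_mix eq_sym (negbTE nik) eq_sym (negbTE njk).
have xW : x \notin W.
  apply/negP => xW; have := U x j xW xj => xu.
  by move: ui; rewrite -xu xi eqxx.
have yW : y \notin W.
  apply/negP => yW; have := U y i yW yi => yu.
  by move: uj; rewrite -yu yj eqxx.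
have nxy : x != y.
  by apply/eqP => exy; move: ui; rewrite -yi -exy xi eqxx.
move=> /(_ x y xW yW nxy) [w wW].
have nxw : x != w by apply: contraNneq xW => ->.
have nyw : y != w by apply: contraNneq yW => ->.
rewrite !dist_ne // !adjE.
have -> : share x w = share y w.
  have cov := cover3 _ nij njk nik.
  apply/idP/idP => /existsP [l /eqP hl].
  - case/or3P: (cov l) => /eqP el; subst l.
    + case: (Ai w wW (etrans (esym hl) xi)) => ->.
        by apply/existsP; exists k; rewrite yk w1k.
      by apply/existsP; exists j; rewrite yj w2j.
    + have -> := U w j wW (etrans (esym hl) xj).
      by apply/existsP; exists i; rewrite yi.
    + by apply/existsP; exists k; rewrite yk -hl xk.
  - case/or3P: (cov l) => /eqP el; subst l.
    + have -> := U w i wW (etrans (esym hl) yi).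
      by apply/existsP; exists j; rewrite xj.
    + case: (Bj w wW (etrans (esym hl) yj)) => ->.
        by apply/existsP; exists i; rewrite xi w2i.
      by apply/existsP; exists k; rewrite xk w3k.
    + by apply/existsP; exists k; rewrite xk -hl yk.
by rewrite eqxx.
Qed.
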